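(* Fix an integer $k\ge 2$. For all but $O_k(N^{k-1})$ choices of positive integers $n_1<\cdots<n_k\le N$, the following holds for $F(x)=1+x^{n_1}+\cdots+x^{n_k}$: if $G(x)$ is any $0,1$-polynomial with the same number of terms as $F(x)$ (namely $k+1$) satisfying $F(x)\tilde F(x)=G(x)\tilde G(x)$, then $G(x)\in\{F(x),\tilde F(x)\}$.
   Context: A $0,1$-polynomial is a polynomial each of whose coefficients is $0$ or $1$. For nonzero $f(x)\in\mathbb{R}[x]$, $\tilde f(x)=x^{\deg f}f(1/x)$. The implied constant depends only on $k$. *)

(* Defs.v *)
From mathcomp Require Import all_boot all_order all_algebra.
Set Implicit Arguments. Unset Strict Implicit. Unset Printing Implicit Defensive.
Import Order.TTheory GRing.Theory Num.Theory.
Local Open Scope ring_scope.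

Definition zero_one_poly (p : {poly int}) : bool :=
  all (fun c => (c == 0) || (c == 1)) (polyseq p).

Definition nterms (p : {poly int}) : nat := count (fun c => c != 0) (polyseq p).

(* reciprocal polynomial  ~f(x) = x^{deg f} f(1/x)  (deg f = size f - 1) *)
Definition recip (p : {poly int}) : {poly int} :=
  \poly_(i < size p) p`_((size p).-1 - i).

Definition admissible (k N : nat) (t : {ffun 'I_k -> 'I_N.+1}) : Prop :=
  (forall i : 'I_k, (0 < t i)%N) /\
  (forall i j : 'I_k, (i < j)%N -> (t i < t j)%N).

Definition Fpoly (k N : nat) (t : {ffun 'I_k -> 'I_N.+1}) : {poly int} :=
  1 + \sum_(i < k) 'X^(t i).

Definition good (k N : nat) (t : {ffun 'I_k -> 'I_N.+1}) : Prop :=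
  forall G : {poly int},
    zero_one_poly G -> nterms G = k.+1 ->
    Fpoly t * recip (Fpoly t) = G * recip G ->
    G = Fpoly t \/ G = recip (Fpoly t).

(* Main.v *)
Require Import Defs.
From mathcomp Require Import all_boot all_order all_algebra.
From mathcomp Require Import ring.
Set Implicit Arguments. Unset Strict Implicit. Unset Printing Implicit Defensive.
Import Order.TTheory GRing.Theory Num.Theory.
Local Open Scope ring_scope.


Lemma zo_coef (G : {poly int}) : zero_one_poly G -> forall x, G`_x = 0 \/ G`_x = 1.
Proof.
move=> /allP H x; case: (ltnP x (size G)) => Hx.
  by have /H /orP[/eqP->|/eqP->] := mem_nth 0 Hx; [left|right].
by left; rewrite nth_default.
Qed.

Lemma zo_ge0 (G : {poly int}) : zero_one_poly G -> forall x, 0 <= G`_x.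
Proof. by move=> H x; case: (zo_coef H x) => ->. Qed.

Lemma coef_size (p : {poly int}) x : p`_x != 0 -> (x < size p)%N.
Proof. by apply: contraR; rewrite -leqNgt => h; rewrite nth_default. Qed.

Lemma recip_coef (p : {poly int}) x : (recip p)`_x = if (x < size p)%N then p`_((size p).-1 - x) else 0.
Proof. by rewrite /recip coef_poly. Qed.

Lemma size_recip (p : {poly int}) : p`_0 != 0 -> size (recip p) = size p.
Proof. by move=> h; rewrite /recip size_poly_eq // subnn. Qed.

Lemma zo_recip_ge0 (G : {poly int}) : zero_one_poly G -> forall x, 0 <= (recip G)`_x.
Proof. by move=> H x; rewrite recip_coef; case: ifP => // _; apply: zo_ge0. Qed.


Lemma sum_ind (y n : nat) : (\sum_(x < n) (y == x : nat))%N = (y < n)%N.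
Proof.
elim: n => [|n IH]; first by rewrite big_ord0.
rewrite big_ord_recr /= IH ltnS (leq_eqVlt y n).
by case: (ltngtP y n) => //= ->; rewrite eqxx.
Qed.

Lemma comb6 (ip jp iq jq u v : nat) : ip != jp -> iq != jq ->
  (forall x, ((ip == x) + (jq == x) + (v == x) = (jp == x) + (iq == x) + (u == x))%N) ->
  ip = iq \/ jp = jq.
Proof.
move=> h1 h2 H.
case: (eqVneq ip iq) => [->|n1]; first by left.
case: (eqVneq jp jq) => [->|n2]; first by right.
exfalso.
have pos : forall x, (ip == x) || (jq == x) || (v == x) -> (jp == x) || (iq == x) || (u == x).
  move=> x; move: (H x); case: (ip == x); case: (jq == x); case: (v == x);
  case: (jp == x); case: (iq == x); case: (u == x) => //.
have := pos ip; rewrite eqxx /= eq_sym (negbTE h1) eq_sym (negbTE n1) /= => /(_ isT) /eqP eu.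
subst u.
have := pos jq; rewrite eqxx orbT /= (negbTE n2) (negbTE h2) /= => /(_ isT) /eqP ej.
subst jq.
move: (H ip); rewrite eqxx (eq_sym jp ip) (negbTE h1) (eq_sym iq ip) (negbTE n1).
by case: (v == ip).
Qed.


Lemma zo_eq (G : {poly int}) (b : bool) x : zero_one_poly G -> (G`_x != 0) = b -> G`_x = b%:R.
Proof. by move=> zo; case: (zo_coef zo x) => ->; rewrite ?oner_eq0 /= => <-. Qed.

Lemma cover (Bs : seq nat) (n : nat) (f : nat -> int) : uniq Bs -> size Bs = n.+1 ->
  (forall b, b \in Bs -> exists2 j, (j <= n)%N & (b : int) = f j) ->
  forall j, (j <= n)%N -> exists2 b, b \in Bs & f j = (b : int).
Proof.
move=> u sz H j hj.
set Ts := [seq f j | j <- iota 0 n.+1].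
have u' : uniq (map Posz Bs) by rewrite map_inj_uniq //; move=> a b [].
have sub : {subset map Posz Bs <= Ts}.
  move=> y /mapP [b hb ->]; have [j' hj' ->] := H b hb.
  by apply/mapP; exists j' => //; rewrite mem_iota.
have szT : (size Ts <= size (map Posz Bs))%N by rewrite /Ts !size_map size_iota sz.
have [_ eqs] := uniq_min_size u' sub szT.
have : f j \in Ts by apply/mapP; exists j => //; rewrite mem_iota.
by rewrite -eqs => /mapP [b hb ->]; exists b.
Qed.

Section S.
Variables (k N : nat) (t : {ffun 'I_k -> 'I_N.+1}).

Definition Aseq : seq nat := 0%N :: [seq val (t i) | i <- enum 'I_k].
Definition av (x : nat) : nat := nth 0%N Aseq x.

Lemma size_Aseq : size Aseq = k.+1.
Proof. by rewrite /= size_map size_enum_ord. Qed.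

Lemma av0 : av 0 = 0%N. Proof. by []. Qed.

Lemma avS (m : 'I_k) : av m.+1 = t m.
Proof. by rewrite /av /= (nth_map m) ?size_enum_ord // nth_ord_enum. Qed.

Lemma memA x : reflect (exists2 j, (j <= k)%N & x = av j) (x \in Aseq).
Proof.
apply: (iffP (nthP 0%N)); rewrite size_Aseq.
  by case=> j Hj <-; exists j.
by case=> j Hj ->; exists j.
Qed.

Lemma aE x : (x <= k)%N ->
  (av x : int) = \sum_(m < k) (((x == m.+1 : nat) : int) * ((t m : nat) : int)).
Proof.
case: x => [|x] Hx.
  by rewrite av0 big1 // => m _; rewrite mul0r.
have Hx' : (x < k)%N by [].
rewrite (bigD1 (Ordinal Hx')) //= eqxx mul1r big1 ?addr0.
  by rewrite (avS (Ordinal Hx')).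
move=> m Hm; rewrite eqSS.
case: eqP => [E|]; last by rewrite mul0r.
by move: Hm; rewrite -val_eqE /= E eqxx.
Qed.

Hypothesis adm : admissible t.

Lemma av_lt i j : (i < j)%N -> (j <= k)%N -> (av i < av j)%N.
Proof.
case: adm => pos inc.
case: j => [//|j] Hij Hj.
have Hj' : (j < k)%N by [].
rewrite (avS (Ordinal Hj')).
case: i Hij => [_|i Hij]; first by rewrite av0 pos.
have Hi' : (i < k)%N by apply: ltnW; apply: leq_trans Hij Hj.
by rewrite (avS (Ordinal Hi')); apply: inc.
Qed.

Lemma av_le i j : (i <= j)%N -> (j <= k)%N -> (av i <= av j)%N.
Proof.
rewrite leq_eqVlt => /orP[/eqP->//|]; move=> h1 h2; apply: ltnW; exact: av_lt.
Qed.

Lemma av_inj i j : (i <= k)%N -> (j <= k)%N -> av i = av j -> i = j.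
Proof.
move=> Hi Hj E; case: (ltngtP i j) => // h.
  by have := av_lt h Hj; rewrite E ltnn.
by have := av_lt h Hi; rewrite E ltnn.
Qed.

Definition F := Fpoly t.

Lemma coefF x : F`_x = (x \in Aseq)%:R.
Proof.
rewrite /F /Fpoly coefD coef1 coef_sum.
under eq_bigr do rewrite coefXn.
case: adm => pos inc.
have tinj : injective t.
  move=> i j E; apply/eqP; case: (ltngtP i j) => [h|h|/val_inj->//].
    by have := inc _ _ h; rewrite E ltnn.
  by have := inc _ _ h; rewrite E ltnn.
have -> : (x \in Aseq) = (x == 0%N) || (x \in [seq val (t i) | i <- enum 'I_k]) by [].
case: (x =P 0%N) => [->|Hx] /=.
  rewrite big1 ?addr0 //= => m _.
  by have := pos m; case: (t m) => [[|v] ?] //.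
rewrite add0r; case: (boolP (x \in _)) => /mapP.
  case=> m _ ->; rewrite (bigD1 m) //= eqxx big1 ?addr0 // => j Hj.
  case: eqP => // E; exfalso; move: Hj; rewrite (tinj j m) ?eqxx //.
  exact: val_inj.
move=> H; rewrite big1 // => m _; case: eqP => // E; exfalso; apply: H.
by exists m; rewrite ?mem_enum.
Qed.


Lemma memA_le x : x \in Aseq -> (x <= av k)%N.
Proof. by case/memA=> j Hj ->; apply: av_le. Qed.

Lemma av_k_in : av k \in Aseq.
Proof. by apply/memA; exists k. Qed.

Lemma sizeF : size F = (av k).+1.
Proof.
apply/eqP; rewrite eqn_leq; apply/andP; split.
  apply/leq_sizeP => j Hj; rewrite coefF.
  by case: (boolP (j \in Aseq)) => // /memA_le h; move: Hj; rewrite ltnNge h.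
rewrite ltnNge; apply/negP => /leq_sizeP /(_ (av k) (leqnn _)).
rewrite coefF av_k_in; apply/eqP; exact: oner_neq0.
Qed.

Lemma coefRF x : (recip F)`_x = ((x <= av k)%N && ((av k - x)%N \in Aseq))%:R.
Proof.
rewrite /recip coef_poly sizeF ltnS /=.
by case: (x <= av k)%N => //; rewrite coefF.
Qed.


Lemma F0 : F`_0 = 1.
Proof. by rewrite coefF. Qed.

Lemma Fzo : forall x, 0 <= F`_x.
Proof. by move=> x; rewrite coefF; case: (_ \in _). Qed.

Lemma diffG (G : {poly int}) : zero_one_poly G -> F * recip F = G * recip G ->
  [/\ G`_0 != 0, size G = size F &
  forall p q, G`_p != 0 -> G`_q != 0 -> exists i j, [/\ (i <= k)%N, (j <= k)%N &
     (p : int) - (q : int) = (av i : int) - (av j : int)]].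
Proof.
move=> zo E.
have Fn0 : F != 0 by apply/eqP => h; move: F0; rewrite h coef0 => /eqP; rewrite eq_sym oner_eq0.
have G0 : G`_0 != 0.
  have := coef0M F (recip F); rewrite E coef0M recip_coef.
  case: (boolP (G`_0 == 0)) => // /eqP ->; rewrite mul0r F0 mul1r recip_coef.
  rewrite size_poly_gt0 Fn0 subn0 => /eqP; rewrite eq_sym -lead_coefE lead_coef_eq0.
  by rewrite (negbTE Fn0).
have Gn0 : G != 0 by apply/eqP => h; move: G0; rewrite h coef0 eqxx.
have RF0 : recip F != 0 by rewrite -size_poly_gt0 size_recip ?F0 ?oner_eq0 // size_poly_gt0.
have RG0 : recip G != 0 by rewrite -size_poly_gt0 size_recip // size_poly_gt0.
have sGF : size G = size F.
  have := congr1 (fun p : {poly int} => size p) E; rewrite /=; rewrite !size_mul // !size_recip ?F0 ?oner_eq0 //.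
  have := size_poly_gt0 F; have := size_poly_gt0 G; rewrite Fn0 Gn0.
  case: (size F) => [|a] //; case: (size G) => [|b] // _ _.
  rewrite !addnS /= => -[]; rewrite !addnn => e; apply/eqP; rewrite eqSS eqn_leq -(leq_double b a) -(leq_double a b) e leqnn //=.
split => // p q Hp Hq.
have sp := coef_size Hp; have sq := coef_size Hq.
have sG0 : (0 < size G)%N := leq_ltn_trans (leq0n p) sp.
have qs : (q <= (size G).-1)%N by rewrite -ltnS prednK.
set m := ((size G).-1 + p - q)%N.
have mE : m = ((size G).-1 - q + p)%N by rewrite /m addnBAC.
have Hpm : (p < m.+1)%N by rewrite mE ltnS leq_addl.
have pos : 0 < (G * recip G)`_m.
  rewrite coefM (bigD1 (Ordinal Hpm)) //=.
  have -> : (m - p)%N = ((size G).-1 - q)%N by rewrite mE addnK.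
  rewrite recip_coef ifT; last by apply: leq_ltn_trans (leq_subr q _) _; rewrite ltn_predL.
  have -> : ((size G).-1 - ((size G).-1 - q))%N = q by rewrite subKn.
  have e1 : G`_p = 1 by case: (zo_coef zo p) Hp => ->; rewrite ?eqxx.
  have e2 : G`_q = 1 by case: (zo_coef zo q) Hq => ->; rewrite ?eqxx.
  rewrite e1 e2 mul1r; apply: (lt_le_trans ltr01); rewrite lerDl.
  by apply: sumr_ge0 => l _; apply: mulr_ge0; [apply: zo_ge0|apply: zo_recip_ge0].
rewrite -E coefM in pos.
have [l Hl] : exists l : 'I_m.+1, F`_l * (recip F)`_(m - l) != 0.
  apply/existsP; move: pos; apply: contraTT; rewrite negb_exists => /forallP H.
  rewrite big1 ?ltxx // => l _; apply/eqP; by have := H l; rewrite negbK.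
move: Hl; rewrite coefF coefRF.
case: (boolP (val l \in Aseq)) => [/memA [i Hi Ei]|]; last by rewrite mul0r eqxx.
case: (boolP (m - l <= av k)%N) => //= Hml.
case: (boolP ((av k - (m - l))%N \in Aseq)) => [/memA [j Hj Ej]|]; last by rewrite mulr0 eqxx.
move=> _; exists i, j; split => //.
have sF := sizeF; have lm := ltn_ord l.
have Lm : (nat_of_ord l <= m)%N by rewrite -ltnS.
have e1 : (av j : int) = (av k : int) - ((m : int) - (nat_of_ord l : int)).
  by rewrite -Ej subzn // subzn.
have e2 : (m : int) = (((size G).-1 : nat) : int) - (q : int) + (p : int).
  by rewrite mE PoszD subzn.
have e3 : (size G).-1 = av k by rewrite sGF sF.
have e4 : (av i : int) = (nat_of_ord l : int) by rewrite -Ei.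
rewrite e1 e2 e3 e4; ring.
Qed.


Definition generic := forall d : 'I_k -> int, (forall m, `|d m| <= 3) ->
  \sum_(m < k) d m * ((t m : nat) : int) = 0 -> forall m, d m = 0.

Lemma gen6 (gen : generic) (i j i' j' u v : nat) :
  (i <= k)%N -> (j <= k)%N -> (i' <= k)%N -> (j' <= k)%N -> (u <= k)%N -> (v <= k)%N ->
  Posz (av i) - Posz (av j) - Posz (av i') + Posz (av j') - Posz (av u) + Posz (av v) = 0 ->
  forall x, ((i == x) + (j' == x) + (v == x) = (j == x) + (i' == x) + (u == x))%N.
Proof.
move=> hi hj hi' hj' hu hv E.
pose L x := ((i == x) + (j' == x) + (v == x))%N.
pose R x := ((j == x) + (i' == x) + (u == x))%N.
pose d (m : 'I_k) := (L m.+1 : int) - (R m.+1 : int).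
have dE : forall m, d m = 0.
  apply: gen.
    move=> m; rewrite /d /L /R.
    by do 6 case: (_ == _).
  pose P y (m : 'I_k) := ((y == m.+1 : nat) : int) * ((t m : nat) : int).
  have -> : \sum_(m < k) d m * ((t m : nat) : int) =
     \sum_(m < k) (P i m - P j m - P i' m + P j' m - P u m + P v m).
    by apply: eq_bigr => m _; rewrite /d /L /R /P !PoszD; ring.
  rewrite big_split sumrB big_split sumrB sumrB /= .
  by rewrite (aE hi) (aE hj) (aE hi') (aE hj') (aE hu) (aE hv) in E.
have LR : forall m : 'I_k, L m.+1 = R m.+1.
  by move=> m; apply/eqP; rewrite -eqz_nat -subr_eq0; apply/eqP; apply: dE.
have tot : forall a b c, (a <= k)%N -> (b <= k)%N -> (c <= k)%N ->
    (\sum_(x < k.+1) ((a == x) + (b == x) + (c == x)) = 3)%N.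
  by move=> a b c ha hb hc; rewrite !big_split /= !sum_ind !ltnS ha hb hc.
have L0 : L 0%N = R 0%N.
  have := tot _ _ _ hi hj' hv; rewrite -(tot _ _ _ hj hi' hu).
  rewrite !big_ord_recl /=.
  have -> : (\sum_(x < k) ((i == bump 0 x) + (j' == bump 0 x) + (v == bump 0 x)) =
             \sum_(x < k) ((j == bump 0 x) + (i' == bump 0 x) + (u == bump 0 x)))%N.
    by apply: eq_bigr => m _; exact: (LR m).
  by move/addIn.
move=> x; case: x => [|x]; first exact: L0.
case: (ltnP x k) => hx; first exact: (LR (Ordinal hx)).
have ne : forall y, (y <= k)%N -> (y == x.+1) = false.
  by move=> y hy; apply/negbTE; apply: contra_leqN hy => /eqP ->; rewrite ltnS.
by rewrite !ne.
Qed.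


Lemma good_of_generic : (2 <= k)%N -> generic -> good t.
Proof.
move=> hk gen G zo nt E.
have [G0 sGF dif] := diffG zo E.
have Gx0 : forall x, G`_x != 0 -> (x < size G)%N by move=> x; apply: coef_size.
set n := (size G).-1.
have sGn : size G = n.+1 by have := Gx0 _ G0; rewrite /n; case: (size G).
set Bs' := [seq x <- iota 1 n | G`_x != 0].
set Bs := 0%N :: Bs'.
have memB' : forall x, (x \in Bs') = (0 < x)%N && (G`_x != 0).
  move=> x; rewrite mem_filter mem_iota andbC; case: (boolP (G`_x != 0)) => hx; rewrite ?andbT ?andbF //; have := Gx0 _ hx.
  move=> hs; rewrite add1n ltnS; move: hs; rewrite sGn ltnS => ->; by rewrite andbT.
have memB : forall x, (x \in Bs) = (G`_x != 0).
  move=> x; rewrite in_cons memB'; case: (x =P 0%N) => [->|/eqP nx] //=.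
  by rewrite lt0n nx.
have uB' : uniq Bs' by apply: filter_uniq; apply: iota_uniq.
have uB : uniq Bs by rewrite /= uB' memB' ltnn.
have szB : size Bs = k.+1.
  rewrite -nt /nterms -(mkseq_nth 0 G) /mkseq count_map sGn /= -/n.
  rewrite /Bs /= size_filter.
  by rewrite /= -/(nth 0 G 0) G0 add1n.
have szB' : size Bs' = k by move: szB; rewrite /= => -[].
have rep : forall x, G`_x != 0 -> exists i j, [/\ (i <= k)%N, (j <= k)%N & (x : int) = (av i : int) - (av j : int)].
  move=> x hx; have [i [j [hi hj e]]] := dif x 0%N hx G0; exists i, j; split => //.
  by rewrite -e subr0.
have pr : forall x y i j i' j', G`_x != 0 -> G`_y != 0 -> x != 0%N -> y != 0%N ->
    (i <= k)%N -> (j <= k)%N -> (i' <= k)%N -> (j' <= k)%N ->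
    (x : int) = (av i : int) - (av j : int) -> (y : int) = (av i' : int) - (av j' : int) ->
    i = i' \/ j = j'.
  move=> x y i j i' j' hx hy nx ny hi hj hi' hj' ex ey.
  have [u [v [hu hv euv]]] := dif x y hx hy.
  apply: (@comb6 i j i' j' u v).
  - by apply: contra nx => /eqP e; move: ex; rewrite e subrr => /eqP; rewrite -[0]/(Posz 0) eqz_nat.
  - by apply: contra ny => /eqP e; move: ey; rewrite e subrr => /eqP; rewrite -[0]/(Posz 0) eqz_nat.
  apply: (gen6 gen hi hj hi' hj' hu hv).
  transitivity ((x : int) - (y : int) - ((av u : int) - (av v : int))); last by rewrite euv subrr.
  rewrite ex ey; ring.
have k0 : (0 < k)%N := ltnW hk.
have k1 : (1 < k)%N := hk.
set b1 := nth 0%N Bs' 0; set b2 := nth 0%N Bs' 1.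
have hb1 : b1 \in Bs' by apply: mem_nth; rewrite szB'.
have hb2 : b2 \in Bs' by apply: mem_nth; rewrite szB'.
have b12 : b1 != b2 by rewrite /b1 /b2 nth_uniq ?szB'.
move: hb1 hb2; rewrite !memB' => /andP [p1 g1] /andP [p2 g2].
have n1 : b1 != 0%N by rewrite -lt0n.
have n2 : b2 != 0%N by rewrite -lt0n.
have [i1 [j1 [hi1 hj1 e1]]] := rep _ g1.
have [i2 [j2 [hi2 hj2 e2]]] := rep _ g2.
case: (pr _ _ _ _ _ _ g1 g2 n1 n2 hi1 hj1 hi2 hj2 e1 e2) => [ei|ej].
-
  subst i2.
  have cov : forall b, b \in Bs -> exists2 j, (j <= k)%N & (b : int) = (av i1 : int) - (av j : int).
    move=> b; rewrite memB => hb.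
    case: (b =P 0%N) => [->|/eqP nb]; first by exists i1 => //; rewrite subrr.
    have [i' [j' [hi' hj' e']]] := rep _ hb.
    case: (pr _ _ _ _ _ _ g1 hb n1 nb hi1 hj1 hi' hj' e1 e') => [ei'|ej1].
      by exists j' => //; rewrite e' ei'.
    case: (pr _ _ _ _ _ _ g2 hb n2 nb hi1 hj2 hi' hj' e2 e') => [ei'|ej2].
      by exists j' => //; rewrite e' ei'.
    by exfalso; move: b12; rewrite -eqz_nat e1 e2 ej1 ej2 eqxx.
  have cv := cover uB szB cov.
  have ik : i1 = k.
    have [b _ eb] := cv k (leqnn k).
    apply/eqP; rewrite eqn_leq hi1 /=; rewrite leqNgt; apply/negP => lt.
    have le : (av k <= av i1)%N by rewrite -lez_nat -subr_ge0 eb.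
    by have := av_lt lt (leqnn k); rewrite ltnNge le.
  subst i1.
  right; apply/polyP => x; rewrite coefRF.
  apply: zo_eq => //.
  apply/idP/idP.
    rewrite -memB => /cov [j hj ej].
    have := av_le hj (leqnn k); move=> le.
    have ex : x = (av k - av j)%N by apply/eqP; rewrite -eqz_nat ej subzn.
    rewrite ex leq_subr /=; apply/memA; exists j => //; by rewrite subKn.
  case/andP => hx /memA [j hj ej].
  have [b hb eb] := cv j hj.
  rewrite -memB; suff -> : x = b by [].
  by apply/eqP; rewrite -eqz_nat -eb -ej -(subzn hx); apply/eqP; ring.
-
  subst j2.
  have cov : forall b, b \in Bs -> exists2 i, (i <= k)%N & (b : int) = (av i : int) - (av j1 : int).
    move=> b; rewrite memB => hb.
    case: (b =P 0%N) => [->|/eqP nb]; first by exists j1 => //; rewrite subrr.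
    have [i' [j' [hi' hj' e']]] := rep _ hb.
    case: (pr _ _ _ _ _ _ g1 hb n1 nb hi1 hj1 hi' hj' e1 e') => [ei1|ej']; last by exists i' => //; rewrite e' ej'.
    case: (pr _ _ _ _ _ _ g2 hb n2 nb hi2 hj1 hi' hj' e2 e') => [ei2|ej']; last by exists i' => //; rewrite e' ej'.
    by exfalso; move: b12; rewrite -eqz_nat e1 e2 ei1 ei2 eqxx.
  have cv := cover uB szB cov.
  have j0 : j1 = 0%N.
    have [b _ eb] := cv 0%N (leq0n k).
    apply: (av_inj hj1 (leq0n k)); rewrite av0 in eb *.
    by move: (le0z_nat b); rewrite -eb sub0r oppr_ge0 lez_nat leqn0 => /eqP ->.
  subst j1.
  left; apply/polyP => x; rewrite coefF.
  apply: zo_eq => //.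
  apply/idP/idP.
    rewrite -memB => /cov [i hi ei]; apply/memA; exists i => //; by move: ei; rewrite av0 subr0 => -[].
  case/memA => i hi ->.
  have [b hb eb] := cv i hi.
  rewrite -memB; suff -> : av i = b by [].
  by move: eb; rewrite av0 subr0 => -[].
Qed.

End S.
Arguments Aseq {k N}.

Definition cv (x : 'I_7) : int := ((x : nat) : int) - 3.

Definition Sol (k N : nat) (c : {ffun 'I_k -> 'I_7}) : {set {ffun 'I_k -> 'I_N.+1}} :=
  [set t : {ffun 'I_k -> 'I_N.+1} | \sum_(m < k) cv (c m) * ((t m : nat) : int) == 0].

Definition nzc k (c : {ffun 'I_k -> 'I_7}) : bool := [exists m, (c m : nat) != 3%N].

Lemma card_Sol k N (c : {ffun 'I_k -> 'I_7}) : nzc c -> (#|Sol N c| <= N.+1 ^ k.-1)%N.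
Proof.
case/existsP => m0 hm0.
pose f (t : {ffun 'I_k -> 'I_N.+1}) : {ffun 'I_k.-1 -> 'I_N.+1} := [ffun j => t (lift m0 j)].
have inj : {in Sol N c &, injective f}.
  move=> t1 t2; rewrite !inE => /eqP h1 /eqP h2 ef.
  have off : forall m, m != m0 -> t1 m = t2 m.
    move=> m; case: (unliftP m0 m) => [j ->|->]; last by rewrite eqxx.
    by move=> _; have := congr1 (fun g : {ffun 'I_k.-1 -> 'I_N.+1} => g j) ef; rewrite !ffunE.
  apply/ffunP => m; case: (eqVneq m m0) => [->|/off //].
  rewrite (bigD1 m0) //= in h1; rewrite (bigD1 m0) //= in h2.
  have es : \sum_(i < k | i != m0) cv (c i) * ((t1 i : nat) : int) = \sum_(i < k | i != m0) cv (c i) * ((t2 i : nat) : int).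
    by apply: eq_bigr => i hi; rewrite off.
  rewrite es in h1; have : cv (c m0) * ((t1 m0 : nat) : int) = cv (c m0) * ((t2 m0 : nat) : int).
    by apply: (addIr (\sum_(i < k | i != m0) cv (c i) * ((t2 i : nat) : int))); rewrite h1 h2.
  move/mulfI; have cv0 : cv (c m0) != 0 by rewrite /cv subr_eq0; move: hm0; rewrite -eqz_nat.
  by move=> /(_ cv0) /eqP; rewrite eqz_nat => /eqP /val_inj.
rewrite -(card_in_imset inj).
apply: leq_trans (max_card _) _.
by rewrite card_ffun card_ord card_ord.
Qed.

Lemma card_bigcup_le (I T : finType) (P : pred I) (A : I -> {set T}) :
  (#|\bigcup_(i | P i) A i| <= \sum_(i | P i) #|A i|)%N.
Proof.
apply: (big_ind2 (fun (X : {set T}) n => #|X| <= n)%N).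
- by rewrite cards0.
- by move=> X1 n1 X2 n2 h1 h2; apply: leq_trans (leq_card_setU X1 X2) _; apply: leq_add.
- by [].
Qed.

Lemma not_in_U_generic k N (t : {ffun 'I_k -> 'I_N.+1}) :
  (forall c, nzc c -> t \notin Sol N c) -> generic t.
Proof.
move=> H d hd hs m; apply/eqP/negP => hm.
pose c : {ffun 'I_k -> 'I_7} := [ffun m => inord (absz (d m + 3))].
have cvE : forall m, cv (c m) = d m.
  move=> i; have h := hd i; rewrite /cv ffunE inordK.
    by rewrite abszE ger0_norm; [ring | move: h; rewrite ler_norml => /andP [h1 _]; rewrite -[3]opprK subr_ge0].
  rewrite -ltz_nat abszE ger0_norm.
    by apply: (@le_lt_trans _ _ (3 + 3)); [rewrite lerD2r; move: h; rewrite ler_norml => /andP [] | ].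
  by move: h; rewrite ler_norml => /andP [h1 _]; rewrite -[3]opprK subr_ge0.
have nz : nzc c.
  by apply/existsP; exists m; rewrite -eqz_nat -subr_eq0; move: (cvE m); rewrite /cv => ->; apply/negP.
move/(_ c nz): H; rewrite inE => /negP; apply; apply/eqP.
by under eq_bigr do rewrite cvE.
Qed.

Local Close Scope ring_scope.
Theorem mainTheorem4 (k : nat) (hk : (2 <= k)%N) :
  exists C : nat, forall (N : nat) (S : {set {ffun 'I_k -> 'I_N.+1}}),
    (forall t, t \in S -> admissible t /\ ~ good t) ->
    (#|S| <= C * N ^ (k - 1))%N.
Proof.
exists (7 ^ k * 2 ^ (k - 1))%N => N S HS.
have k0 : (0 < k)%N := ltnW hk.
case: N => [|N] in S HS *.
  rewrite (_ : S = set0) ?cards0 //; apply/setP => t; rewrite inE; apply/negP => /HS [[pos _] _].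
  by have := pos (Ordinal k0); case: (t (Ordinal k0)) => -[|x].
have sub : S \subset \bigcup_(c | nzc c) Sol N.+1 c.
  apply/subsetP => t ht; apply/negPn/negP => hn; have [adm ng] := HS t ht.
  apply: ng; apply: (good_of_generic adm hk); apply: not_in_U_generic => c hc.
  by apply: contra hn => h; apply/bigcupP; exists c.
apply: leq_trans (subset_leq_card sub) _.
apply: leq_trans (card_bigcup_le _ _) _.
apply: (@leq_trans (\sum_(c : {ffun 'I_k -> 'I_7}) (N.+2 ^ k.-1))%N).
  rewrite big_mkcond /=; apply: leq_sum => c _; case: ifP => // hc; exact: card_Sol.
rewrite sum_nat_const card_ffun !card_ord.
have e : (N.+2 ^ k.-1 <= 2 ^ (k - 1) * N.+1 ^ (k - 1))%N.
  rewrite subn1 -expnMn leq_exp2r; first by rewrite mul2n -addnn addSn ltnS leq_addl.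
  by rewrite -subn1 subn_gt0.
rewrite -mulnA; apply: leq_mul => //.
Qed.
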